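(* Let $R,S\in GL(2,\mathbb{C})$ be diagonalizable matrices with eigenvalues $r_1,r_2\in S^1$ and $s_1,s_2\in S^1$ respectively, such that $r_1\ne r_2$, $s_1\ne s_2$, $\{r_1,r_2\}\cap\{s_1,s_2\}=\emptyset$, and $1$ is an eigenvalue of $RS^{-1}$. Then there is a non-degenerate Hermitian form $\langle\cdot,\cdot\rangle_H$ on $\mathbb{C}^2$ invariant under both $R$ and $S$, unique up to multiplication by a real scalar. Moreover, $\langle\cdot,\cdot\rangle_H$ is definite if and only if the two pairs $\{r_1,r_2\}$ and $\{s_1,s_2\}$ interlace on the unit circle.
   Context: $S^1$ is the unit circle in $\mathbb{C}$. A Hermitian form $h$ is invariant under $R$ if $h(Rv,Rw)=h(v,w)$ for all $v,w\in\mathbb{C}^2$. Two pairs of distinct points on a circle interlace if each of the two arcs determined by one pair contains exactly one point of the other pair. *)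

(* Defs.v *)
From HB Require Import structures.
From mathcomp Require Import all_boot all_order all_algebra.
From mathcomp Require Import reals trigo.
From mathcomp Require Import complex.
Set Implicit Arguments. Unset Strict Implicit. Unset Printing Implicit Defensive.
Import Order.TTheory GRing.Theory Num.Theory.
Local Open Scope ring_scope.
Local Open Scope complex_scope.

Section Defs.
Variable R : realType.
Local Notation C := (R[i]).

Definition hform (H : 'M[C]_2) (v w : 'cV[C]_2) : C :=
  ((map_mx Num.conj v)^T *m H *m w) ord0 ord0.

Definition hermitian_mx (H : 'M[C]_2) : Prop :=
  map_mx Num.conj H^T = H.

Definition nondegenerate_form (H : 'M[C]_2) : Prop :=
  forall v : 'cV[C]_2, (forall w, hform H v w = 0) -> v = 0.

Definition invariant_form (H : 'M[C]_2) (A : 'M[C]_2) : Prop :=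
  forall v w : 'cV[C]_2, hform H (A *m v) (A *m w) = hform H v w.

Definition definite_form (H : 'M[C]_2) : Prop :=
  (forall v : 'cV[C]_2, v != 0 -> 0 < hform H v v) \/
  (forall v : 'cV[C]_2, v != 0 -> hform H v v < 0).

Definition expi (t : R) : C := (cos t +i* sin t).

(* open counterclockwise arc of the unit circle from a to b (a, b distinct) *)
Definition ccw_arc (a b z : C) : Prop :=
  exists th t : R, [/\ 0 < t, t < th, th < 2 * pi, b = a * expi th & z = a * expi t].

Definition interlace (a b c d : C) : Prop :=
  (ccw_arc a b c <-> ~ ccw_arc a b d) /\ (ccw_arc b a c <-> ~ ccw_arc b a d).

End Defs.

(* Main.v *)
Require Import Defs.
From HB Require Import structures.
From mathcomp Require Import all_boot all_order all_algebra.
From mathcomp Require Import reals trigo.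
From mathcomp Require Import complex.
From mathcomp Require Import ring lra.
Import Order.TTheory GRing.Theory Num.Theory.
Local Open Scope ring_scope.
Local Open Scope complex_scope.
Set Implicit Arguments. Unset Strict Implicit. Unset Printing Implicit Defensive.

Section Trig.
Variable R : realType.
Local Notation C := (R[i]).
Local Notation E := (@expi R).

Lemma conjE (a b : R) : ((a +i* b)^*)%R = a -i* b.
Proof. by []. Qed.
Lemma mulE (a b c d : R) : (a +i* b) * (c +i* d) = (a * c - b * d) +i* (a * d + b * c).
Proof. by []. Qed.

Lemma expiD t u : E (t + u) = E t * E u.
Proof. rewrite /expi cosD sinD; simpc; congr (_ +i* _); ring. Qed.

Lemma expi0 : E 0 = 1.
Proof. by rewrite /expi cos0 sin0. Qed.

Lemma expi2pi : E (pi *+ 2) = 1.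
Proof. by rewrite /expi cos2pi sin2pi. Qed.

Lemma expiN t : E (- t) = ((E t)^*)%R.
Proof. by rewrite /expi cosN sinN. Qed.

Lemma expiNK t : E t * E (- t) = 1.
Proof. by rewrite -expiD subrr expi0. Qed.

Lemma expi_neq0 t : E t != 0.
Proof. by apply/negP => /eqP H; move: (expiNK t); rewrite H mul0r => /eqP; rewrite eq_sym oner_eq0. Qed.

Lemma mulIC (r x y : C) : r != 0 -> r * x = r * y -> x = y.
Proof. by move=> r0 /(congr1 (fun z => r^-1 * z)); rewrite !mulrA mulVf // !mul1r. Qed.

Lemma expi2pi' : E (2 * pi) = 1.
Proof. by rewrite -expi2pi mulr2n mulrDl mul1r. Qed.

Lemma expiN' t : E (- t) = (E t)^-1.
Proof. by apply: (@mulIC (E t)); [exact: expi_neq0|rewrite mulfV ?expi_neq0 // -expiD subrr expi0]. Qed.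

Lemma expi_subI t : E t - E (- t) = (2 * sin t) *i.
Proof. rewrite /expi cosN sinN; simpc; congr (_ +i* _); ring. Qed.


Lemma expiE t : E t = cos t +i* sin t. Proof. by []. Qed.

Lemma expi_eq1 (d : R) : 0 <= d < 2 * pi -> E d = 1 -> d = 0.
Proof.
move=> /andP[d0 d2] Ed.
have cd : cos d = 1 by move/(congr1 (@complex.Re R)): Ed.
have sd : sin d = 0 by move/(congr1 (@complex.Im R)): Ed.
have pi0 := pi_gt0 R.
have [dpi|pid] := lerP d pi.
  apply: (@cos_inj R); rewrite ?in_itv /= ?d0 ?dpi ?lexx ?(ltW pi0) //.
  by rewrite cd cos0.
have p2 : (2 : R) * pi = pi + pi by ring.
have : 0 < sin (d - pi) by apply: sin_gt0_pi; apply/andP; split; clear Ed cd sd; lra.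
move=> h; have := sinDpi (d - pi); rewrite subrK sd; lra.
Qed.

Lemma expi_inj (t u : R) : 0 <= t < 2 * pi -> 0 <= u < 2 * pi -> E t = E u -> t = u.
Proof.
wlog tu : t u / t <= u.
  move=> W ht hu Etu; have [/W|/ltW/W] := lerP t u; first exact.
  by move=> W'; symmetry; apply: W'.
move=> /andP[t0 t2] /andP[u0 u2] Etu.
suff : u - t = 0 by move/eqP; rewrite subr_eq0 => /eqP.
apply: expi_eq1; first by apply/andP; split; lra.
by rewrite expiD -Etu expiNK.
Qed.

Lemma normC_sq (z : C) : `|z| = 1 -> complex.Re z ^+ 2 + complex.Im z ^+ 2 = 1.
Proof.
move=> h; have := add_Re2_Im2 z; rewrite h expr1n.
by move/(congr1 (@complex.Re R)).
Qed.

Lemma expi_surj (z : C) : `|z| = 1 -> exists t : R, 0 <= t < 2 * pi /\ z = E t.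
Proof.
move=> /normC_sq; case: z => a b /= hab.
have pi0 := pi_gt0 R.
have a1 : -1 <= a <= 1 by apply/andP; split; nra.
have ha : a \in `[(-1), 1] by rewrite in_itv.
have sq : Num.sqrt (1 - a ^+ 2) = `|b|.
  by rewrite -sqrtr_sqr; congr Num.sqrt; lra.
have [b0|b0] := lerP 0 b.
  exists (acos a); split.
    by apply/andP; split; [exact: acos_ge0|have := acos_lepi a1; lra].
  by rewrite /expi acosK // sin_acos // sq ger0_norm.
have alt1 : a < 1 by have : a != 1; [apply/eqP => a1'; subst a; nra|]; lra.
have ac0 : 0 < acos a by apply: acos_gt0; apply/andP; split; lra.
have acp := acos_lepi a1.
exists (2 * pi - acos a); split; first by apply/andP; split; lra.
have -> : 2 * pi - acos a = - acos a + pi *+ 2 by rewrite mulr2n; ring.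
by rewrite /expi cosD2pi sinD2pi cosN sinN acosK // sin_acos // sq ltr0_norm // opprK.
Qed.


Lemma arc12 (r1 r2 s : C) (ph al : R) : r1 != 0 ->
  0 < ph < 2 * pi -> 0 < al < 2 * pi -> r2 = r1 * E ph -> s = r1 * E al ->
  ccw_arc r1 r2 s <-> al < ph.
Proof.
move=> r0 /andP[p0 p2] /andP[a0 a2] -> ->; split.
  case=> th [t [t0 tth th2 /(mulIC r0) e1 /(mulIC r0) e2]].
  have -> : ph = th by apply: expi_inj => //; apply/andP; split; lra.
  have -> : al = t by apply: expi_inj => //; apply/andP; split; lra.
  done.
by move=> ap; exists ph, al; split.
Qed.

Lemma arc21 (r1 r2 s : C) (ph al : R) : r1 != 0 ->
  0 < ph < 2 * pi -> 0 < al < 2 * pi -> r2 = r1 * E ph -> s = r1 * E al ->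
  ccw_arc r2 r1 s <-> ph < al.
Proof.
move=> r0 /andP[p0 p2] /andP[a0 a2] -> ->; have pi0 := pi_gt0 R; split.
  case=> th [t [t0 tth th2 e1 e2]].
  have e3 : E (ph + th) = 1.
    by apply: (@mulIC r1) => //; rewrite mulr1 expiD mulrA -e1.
  have hth : ph + th = 2 * pi.
    have [lt|ge] := ltrP (ph + th) (2 * pi).
      by have := expi_eq1 (d := ph + th); rewrite e3 => /(_ _ erefl); lra.
    have : ph + th - 2 * pi = 0.
      apply: expi_eq1; first by apply/andP; split; lra.
      by rewrite expiD e3 mul1r expiN' expi2pi' invr1.
    lra.
  have -> : al = ph + t.
    apply: expi_inj; [by apply/andP; split; lra|by apply/andP; split; lra|].
    by apply: (@mulIC r1) => //; rewrite e2 expiD mulrA.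
  lra.
move=> pa; exists (2 * pi - ph), (al - ph); split; [lra|lra|lra| |].
  by rewrite -mulrA -expiD addrC subrK expi2pi' mulr1.
by rewrite -mulrA -expiD addrC subrK.
Qed.

Lemma unit_conj (r : C) : `|r| = 1 -> (r^*)%R = r^-1.
Proof.
move=> h; have := normCK r; rewrite h expr1n => e.
have r0 : r != 0 by apply/eqP => r0; move: e; rewrite r0 mul0r => /eqP; rewrite oner_eq0.
by apply: (@mulIC r) => //; rewrite -e mulfV.
Qed.

Lemma unit_neq0 (r : C) : `|r| = 1 -> r != 0.
Proof. by move=> h; apply/eqP => r0; move: h; rewrite r0 normr0 => /eqP; rewrite eq_sym oner_eq0. Qed.

Lemma conj_expi t : ((E t)^*)%R = (E t)^-1.
Proof. by rewrite -expiN expiN'. Qed.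

Lemma expi2 t : E (2 * t) = E t * E t.
Proof. by rewrite -expiD mulr2n mulrDl mul1r. Qed.

Lemma g4 (x y z w : R) : x *i * y *i * (z *i * w *i) = (x * y * (z * w))%:C.
Proof. simpc; rewrite /real_complex_def; congr (_ +i* _); ring. Qed.

Lemma key_sign (r1 : C) (a b f : R) : `|r1| = 1 ->
  ((r1 - r1 * E (2 * b))^*)%R * (r1 - r1 * E (2 * a)) *
  (((r1 * E (2 * f) - r1 * E (2 * b))^*)%R * (r1 * E (2 * f) - r1 * E (2 * a)))^*%R
  = ((2 * sin a) * (2 * sin b) * ((2 * sin (f - a)) * (2 * sin (f - b))))%:C.
Proof.
move=> hr; have r0 := unit_neq0 hr.
rewrite -g4 -!expi_subI !opprB !expiD !expiN' !expi2.
rewrite !(rmorphB, rmorphM) /= ?conjCK !conj_expi unit_conj //.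
have := expi_neq0 a; have := expi_neq0 b; have := expi_neq0 f.
move=> hf hb ha; field.
by rewrite r0 ha hb hf.
Qed.

Lemma rel_angle (r z : C) : `|r| = 1 -> `|z| = 1 -> z != r ->
  exists t : R, 0 < t < 2 * pi /\ z = r * E t.
Proof.
move=> hr hz zr; have r0 := unit_neq0 hr.
have [t [/andP [t0 t2] e]] : exists t : R, 0 <= t < 2 * pi /\ z / r = E t.
  by apply: expi_surj; rewrite normf_div hr hz divr1.
have ez : z = r * E t by rewrite -e mulrC divfK.
exists t; split => //; apply/andP; split => //.
rewrite lt_neqAle t0 andbT; apply/eqP => t0'; move: zr; rewrite ez -t0' expi0 mulr1 eqxx //.
Qed.

Lemma sin_pos (x : R) : - pi < x < pi -> (0 < sin x <-> 0 < x).
Proof.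
move=> /andP[h1 h2]; split => h; last by apply: sin_gt0_pi; rewrite h.
have [x0|x0|x0] := ltgtP x 0; [|done|by move: h; rewrite x0 sin0 ltxx].
have : 0 < sin (- x) by apply: sin_gt0_pi; apply/andP; split; lra.
rewrite sinN; lra.
Qed.

Lemma sin_neg (x : R) : - pi < x < pi -> (sin x < 0 <-> x < 0).
Proof.
move=> /andP[h1 h2]; have := sin_pos (x := - x); rewrite sinN.
have -> : - pi < - x < pi by apply/andP; split; lra.
move=> /(_ isT) [H1 H2]; split => h.
  have := H1; lra.
have := H2; lra.
Qed.

Lemma interlace_sign (r1 r2 s1 s2 : C) :
  `|r1| = 1 -> `|r2| = 1 -> `|s1| = 1 -> `|s2| = 1 ->
  r1 != r2 -> [/\ r1 != s1, r1 != s2, r2 != s1 & r2 != s2] ->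
  interlace r1 r2 s1 s2 <->
  ((r1 - s2)^*)%R * (r1 - s1) * (((r2 - s2)^*)%R * (r2 - s1))^*%R < 0.
Proof.
move=> h1 h2 h3 h4 d12 [d11 d12' d21 d22].
have r0 := unit_neq0 h1.
have pi0 := pi_gt0 R.
have [ph [/andP[p0 p2] er2]] : exists t : R, 0 < t < 2 * pi /\ r2 = r1 * E t.
  by apply: rel_angle => //; rewrite eq_sym.
have [al [/andP[a0 a2] es1]] : exists t : R, 0 < t < 2 * pi /\ s1 = r1 * E t.
  by apply: rel_angle => //; rewrite eq_sym.
have [be [/andP[b0 b2] es2]] : exists t : R, 0 < t < 2 * pi /\ s2 = r1 * E t.
  by apply: rel_angle => //; rewrite eq_sym.
have hap : al != ph by apply/eqP => e; move: d21; rewrite er2 es1 e eqxx.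
have hbp : be != ph by apply/eqP => e; move: d22; rewrite er2 es2 e eqxx.
have A1 := arc12 r0 (ph := ph) (al := al); rewrite p0 p2 a0 a2 in A1; have {}A1 := A1 _ _ isT isT er2 es1.
have A2 := arc12 r0 (ph := ph) (al := be); rewrite p0 p2 b0 b2 in A2; have {}A2 := A2 _ _ isT isT er2 es2.
have B1 := arc21 r0 (ph := ph) (al := al); rewrite p0 p2 a0 a2 in B1; have {}B1 := B1 _ _ isT isT er2 es1.
have B2 := arc21 r0 (ph := ph) (al := be); rewrite p0 p2 b0 b2 in B2; have {}B2 := B2 _ _ isT isT er2 es2.
rewrite /interlace A1 A2 B1 B2.
have hal : al = 2 * (al / 2) by field.
have hbe : be = 2 * (be / 2) by field.
have hph : ph = 2 * (ph / 2) by field.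
rewrite er2 es1 es2 [in E al]hal [in E be]hbe [in E ph]hph key_sign //.
rewrite -[0]/((0:R)%:C) ltcR.
have sa : 0 < sin (al / 2) by apply: sin_gt0_pi; apply/andP; split; lra.
have sb : 0 < sin (be / 2) by apply: sin_gt0_pi; apply/andP; split; lra.
have Pa := sin_pos (x := ph / 2 - al / 2).
have Na := sin_neg (x := ph / 2 - al / 2).
have Pb := sin_pos (x := ph / 2 - be / 2).
have Nb := sin_neg (x := ph / 2 - be / 2).
have ia : - pi < ph / 2 - al / 2 < pi by apply/andP; split; lra.
have ib : - pi < ph / 2 - be / 2 < pi by apply/andP; split; lra.
move: Pa Na Pb Nb; rewrite ia ib => /(_ isT) Pa /(_ isT) Na /(_ isT) Pb /(_ isT) Nb.
set X := sin (ph / 2 - al / 2) in Pa Na *; set Y := sin (ph / 2 - be / 2) in Pb Nb *.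
set u := sin (al / 2) in sa *; set v := sin (be / 2) in sb *.
have uv : 0 < 2 * u * (2 * v) by apply: mulr_gt0; apply: mulr_gt0.
have [lta|gta|eqa] := ltgtP al ph; last by move: hap; rewrite eqa eqxx.
  have Xp : 0 < X by apply/Pa; lra.
  have [ltb|gtb|eqb] := ltgtP be ph; last by move: hbp; rewrite eqb eqxx.
    have Yp : 0 < Y by apply/Pb; lra.
    split; [by move=> [[H _] _]; case: (H isT isT)|move=> H; exfalso].
    have : 0 < 2 * u * (2 * v) * (2 * X * (2 * Y)) by apply: mulr_gt0 => //; apply: mulr_gt0; apply: mulr_gt0.
    lra.
  have Yn : Y < 0 by apply/Nb; lra.
  split => [_|_]; last by split; split => // h; case: (h isT).
  have : 2 * u * (2 * v) * (2 * X * (2 * (- Y))) > 0 by apply: mulr_gt0 => //; apply: mulr_gt0; apply: mulr_gt0; lra.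
  have -> : 2 * u * (2 * v) * (2 * X * (2 * - Y)) = - (2 * u * (2 * v) * (2 * X * (2 * Y))) by ring.
  lra.
have Xn : X < 0 by apply/Na; lra.
have [ltb|gtb|eqb] := ltgtP be ph; last by move: hbp; rewrite eqb eqxx.
  have Yp : 0 < Y by apply/Pb; lra.
  split => [_|_]; last by split; split => // h; case: (h isT).
  have : 2 * u * (2 * v) * (2 * (- X) * (2 * Y)) > 0 by apply: mulr_gt0 => //; apply: mulr_gt0; apply: mulr_gt0; lra.
  have -> : 2 * u * (2 * v) * (2 * (- X) * (2 * Y)) = - (2 * u * (2 * v) * (2 * X * (2 * Y))) by ring.
  lra.
have Yn : Y < 0 by apply/Nb; lra.
split; [by move=> [_ [H _]]; case: (H isT isT)|move=> H; exfalso].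
have : 0 < 2 * u * (2 * v) * (2 * (- X) * (2 * (- Y))) by apply: mulr_gt0 => //; apply: mulr_gt0; apply: mulr_gt0; lra.
have -> : 2 * u * (2 * v) * (2 * (- X) * (2 * (- Y))) = 2 * u * (2 * v) * (2 * X * (2 * Y)) by ring.
lra.
Qed.

End Trig.
Section Mx.
Variable R : realType.
Local Notation C := (R[i]).
Local Notation cj A := ((map_mx Num.conj A)^T).

Definition i0 : 'I_2 := @Ordinal 2 0 isT.
Definition i1 : 'I_2 := @Ordinal 2 1 isT.

Lemma ord2P (i : 'I_2) : i = i0 \/ i = i1.
Proof. by case: i => [[|[|//]]] ?; [left|right]; apply: val_inj. Qed.

Lemma ord1P (j : 'I_1) : j = ord0.
Proof. by apply: val_inj; case: j => [[]]. Qed.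

Lemma sum2 (F : 'I_2 -> C) : \sum_(j < 2) F j = F i0 + F i1.
Proof.
rewrite big_ord_recl big_ord1; congr (F _ + F _); by apply: val_inj.
Qed.

Lemma mulE2 m n (A : 'M[C]_(m, 2)) (B : 'M[C]_(2, n)) i j :
  (A *m B) i j = A i i0 * B i0 j + A i i1 * B i1 j.
Proof. by rewrite mxE sum2. Qed.

Lemma cjE m n (A : 'M[C]_(m, n)) i j : (cj A) i j = ((A j i)^*)%R.
Proof. by rewrite !mxE. Qed.

Lemma mx2P (A B : 'M[C]_2) : A i0 i0 = B i0 i0 -> A i0 i1 = B i0 i1 ->
  A i1 i0 = B i1 i0 -> A i1 i1 = B i1 i1 -> A = B.
Proof.
move=> h1 h2 h3 h4; apply/matrixP => i j.
by case: (ord2P i) => ->; case: (ord2P j) => ->.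
Qed.

Lemma cV2P (u v : 'cV[C]_2) : u i0 ord0 = v i0 ord0 -> u i1 ord0 = v i1 ord0 -> u = v.
Proof.
move=> h1 h2; apply/matrixP => i j; rewrite (ord1P j).
by case: (ord2P i) => ->.
Qed.

Definition v2 (a b : C) : 'cV[C]_2 := \matrix_(i, j) (if i == i0 then a else b).
Definition mk2 (u v : 'cV[C]_2) : 'M[C]_2 :=
  \matrix_(i, j) (if j == i0 then u i ord0 else v i ord0).
Definition D2 (a b : C) := mk2 (v2 a 0) (v2 0 b).

Lemma v2E0 a b j : v2 a b i0 j = a. Proof. by rewrite mxE. Qed.
Lemma v2E1 a b j : v2 a b i1 j = b. Proof. by rewrite mxE. Qed.
Lemma mk2E0 u v i : mk2 u v i i0 = u i ord0. Proof. by rewrite mxE. Qed.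
Lemma mk2E1 u v i : mk2 u v i i1 = v i ord0. Proof. by rewrite mxE. Qed.
Lemma D2E a b : [/\ D2 a b i0 i0 = a, D2 a b i0 i1 = 0, D2 a b i1 i0 = 0 & D2 a b i1 i1 = b].
Proof. by rewrite /D2 !mxE. Qed.
Lemma D2E00 a b : D2 a b i0 i0 = a. Proof. by rewrite /D2 !mxE. Qed.
Lemma D2E01 a b : D2 a b i0 i1 = 0. Proof. by rewrite /D2 !mxE. Qed.
Lemma D2E10 a b : D2 a b i1 i0 = 0. Proof. by rewrite /D2 !mxE. Qed.
Lemma D2E11 a b : D2 a b i1 i1 = b. Proof. by rewrite /D2 !mxE. Qed.
Lemma scalar2E (a : C) : [/\ (a%:M : 'M[C]_2) i0 i0 = a, (a%:M : 'M[C]_2) i0 i1 = 0,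
  (a%:M : 'M[C]_2) i1 i0 = 0 & (a%:M : 'M[C]_2) i1 i1 = a].
Proof. by rewrite !mxE. Qed.

Definition mxE2 := (mulE2, cjE, v2E0, v2E1, mk2E0, mk2E1, D2E00, D2E01, D2E10, D2E11).

Lemma mk2_mulr (A : 'M[C]_2) u v : A *m mk2 u v = mk2 (A *m u) (A *m v).
Proof. by apply/mx2P; rewrite !mxE2. Qed.

Lemma mk2_v2 u v a b : mk2 u v *m v2 a b = a *: u + b *: v.
Proof. by apply/cV2P; rewrite !mxE2 !mxE; ring. Qed.

Lemma mk2_D2 u v a b : mk2 u v *m D2 a b = mk2 (a *: u) (b *: v).
Proof. by apply/mx2P; rewrite !mxE2 !mxE; ring. Qed.

Lemma D2M a b c d : D2 a b *m D2 c d = D2 (a * c) (b * d).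
Proof. by apply/mx2P; rewrite !mxE2; ring. Qed.

Lemma cjD2 a b : cj (D2 a b) = D2 (a^*)%R (b^*)%R.
Proof. by apply/mx2P; rewrite !mxE2 ?conjC0. Qed.

Lemma D2_1 : D2 1 1 = 1%:M.
Proof. by apply/mx2P; rewrite !mxE2 !mxE. Qed.

Lemma D2_unit a b : a != 0 -> b != 0 -> D2 a b \in unitmx.
Proof.
move=> a0 b0; have := @mulmx1_unit _ _ (D2 a b) (D2 a^-1 b^-1).
by rewrite D2M !mulfV // D2_1 => /(_ erefl) [].
Qed.

Lemma cjM m n p (A : 'M[C]_(m, n)) (B : 'M[C]_(n, p)) : cj (A *m B) = cj B *m cj A.
Proof. by rewrite map_mxM trmx_mul. Qed.

Lemma cjK m n (A : 'M[C]_(m, n)) : cj (cj A) = A.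
Proof. by apply/matrixP => i j; rewrite !mxE conjCK. Qed.

Lemma cjV (A : 'M[C]_2) : cj (invmx A) = invmx (cj A).
Proof. by rewrite map_invmx trmx_inv. Qed.

Lemma cj_unit (A : 'M[C]_2) : (cj A \in unitmx) = (A \in unitmx).
Proof. by rewrite unitmx_tr map_unitmx. Qed.

Lemma cj1 : cj (1%:M : 'M[C]_2) = 1%:M.
Proof. by rewrite map_mx1 trmx1. Qed.

Lemma cjZ m n a (A : 'M[C]_(m, n)) : cj (a *: A) = (a^*)%R *: cj A.
Proof. by rewrite map_mxZ linearZ. Qed.

Lemma cjD m n (A B : 'M[C]_(m, n)) : cj (A + B) = cj A + cj B.
Proof. by rewrite map_mxD linearD. Qed.

Lemma hform_mul (H A : 'M[C]_2) v w : hform H (A *m v) (A *m w) = hform (cj A *m H *m A) v w.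
Proof. by rewrite /hform cjM !mulmxA. Qed.

Lemma hform_v2 (K : 'M[C]_2) a b c d : hform K (v2 a b) (v2 c d) =
  (a^*)%R * c * K i0 i0 + (a^*)%R * d * K i0 i1 + (b^*)%R * c * K i1 i0 + (b^*)%R * d * K i1 i1.
Proof. by rewrite /hform !mxE2; ring. Qed.

Lemma hform_ij (K : 'M[C]_2) i j : hform K (delta_mx i ord0) (delta_mx j ord0) = K i j.
Proof.
rewrite /hform.
have -> : cj (delta_mx i ord0 : 'cV[C]_2) = delta_mx ord0 i.
  apply/matrixP => a b; rewrite !mxE (ord1P a) eqxx /=.
  by case: (b == i); rewrite ?conjC1 ?conjC0.
by rewrite -rowE -colE !mxE.
Qed.

Lemma inv_formP (H A : 'M[C]_2) : invariant_form H A <-> cj A *m H *m A = H.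
Proof.
split => [h|h v w]; last by rewrite hform_mul h.
apply/matrixP => i j; by rewrite -hform_ij -hform_mul h hform_ij.
Qed.

Lemma nondeg_unit (H : 'M[C]_2) : H \in unitmx -> nondegenerate_form H.
Proof.
move=> Hu v hv; apply/matrixP => k j; rewrite (ord1P j) mxE.
have := hv (invmx H *m delta_mx k ord0).
rewrite /hform !mulmxA mulmxK // -colE !mxE => /eqP; rewrite conjC_eq0 => /eqP.
by [].
Qed.

Lemma v2_eta (u : 'cV[C]_2) : u = v2 (u i0 ord0) (u i1 ord0).
Proof. by apply/cV2P; rewrite !mxE2. Qed.

Lemma v2_00 : v2 0 0 = 0.
Proof. by apply/cV2P; rewrite !mxE2 mxE. Qed.

Lemma colEig n (A : 'M[C]_n) a : eigenvalue A a -> exists2 v : 'cV[C]_n, v != 0 & A *m v = a *: v.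
Proof.
move/eigenvalueP => [u uA u0].
have : \det (A - a%:M) == 0.
  by apply/det0P; exists u => //; rewrite mulmxBr uA mul_mx_scalar subrr.
rewrite -det_tr => /det0P [x x0 hx].
exists x^T; first by rewrite trmx_eq0.
have : (A - a%:M) *m x^T = 0 by rewrite -[A - _]trmxK -trmx_mul hx trmx0.
by rewrite mulmxBl mul_scalar_mx => /eqP; rewrite subr_eq0 => /eqP.
Qed.

Lemma indep (A : 'M[C]_2) e1 e2 a b : A *m e1 = a *: e1 -> A *m e2 = b *: e2 ->
  e1 != 0 -> e2 != 0 -> a != b -> mk2 e1 e2 \in unitmx.
Proof.
move=> h1 h2 n1 n2 ab; rewrite unitmxE unitfE; apply: contraT => /negPn d0.
rewrite -det_tr in d0; case/det0P: d0 => x x0 hx.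
have hz : (x^T i0 ord0) *: e1 + (x^T i1 ord0) *: e2 = 0.
  by rewrite -mk2_v2 -v2_eta -[mk2 _ _]trmxK -trmx_mul hx trmx0.
set c0 := x^T i0 ord0 in hz; set c1 := x^T i1 ord0 in hz.
have hA : (c0 * a) *: e1 + (c1 * b) *: e2 = 0.
  by rewrite -!scalerA -h1 -h2 !scalemxAr -mulmxDr hz mulmx0.
have : (c0 * (a - b)) *: e1 = 0.
  have -> : (c0 * (a - b)) *: e1 = (c0 * a) *: e1 + (c1 * b) *: e2 - b *: (c0 *: e1 + c1 *: e2).
    by apply/cV2P; rewrite !mxE; ring.
  by rewrite hz hA scaler0 subr0.
move/eqP; rewrite scaler_eq0 (negbTE n1) orbF mulf_eq0 subr_eq0 (negbTE ab) orbF => /eqP c00.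
move: hz; rewrite c00 scale0r add0r => /eqP; rewrite scaler_eq0 (negbTE n2) orbF => /eqP c10.
move: x0; rewrite -trmx_eq0 (v2_eta x^T) -/c0 -/c1 c00 c10 v2_00 eqxx //.
Qed.

Lemma CH2 (A : 'M[C]_2) a b : eigenvalue A a -> eigenvalue A b -> a != b ->
  (A - a%:M) *m (A - b%:M) = 0.
Proof.
move=> /colEig [e1 n1 h1] /colEig [e2 n2 h2] ab.
have Pu := indep h1 h2 n1 n2 ab.
have comm : (A - a%:M) *m (A - b%:M) = (A - b%:M) *m (A - a%:M).
  by apply/mx2P; rewrite !mxE2 !mxE /=; ring.
have : (A - a%:M) *m (A - b%:M) *m mk2 e1 e2 = 0.
  rewrite mk2_mulr.
  have -> : (A - a%:M) *m (A - b%:M) *m e1 = 0.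
    by rewrite comm -mulmxA [(A - a%:M) *m e1]mulmxBl h1 mul_scalar_mx subrr mulmx0.
  have -> : (A - a%:M) *m (A - b%:M) *m e2 = 0.
    by rewrite -mulmxA [(A - b%:M) *m e2]mulmxBl h2 mul_scalar_mx subrr mulmx0.
  by apply/mx2P; rewrite !mxE2 !mxE.
by move/(congr1 (mulmx^~ (invmx (mk2 e1 e2)))); rewrite mulmxK // mul0mx.
Qed.

Lemma w_exists (A B : 'M[C]_2) : B \in unitmx -> eigenvalue (A *m invmx B) 1 ->
  exists2 w : 'cV[C]_2, w != 0 & A *m w = B *m w.
Proof.
move=> Bu /eigenvalueP [u uA u0].
have uAB : u *m A = u *m B.
  by move: (congr1 (mulmx^~ B) uA); rewrite scale1r !mulmxA mulmxKV.
have : \det (A - B) == 0.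
  by apply/det0P; exists u => //; rewrite mulmxBr uAB subrr.
rewrite -det_tr => /det0P [x x0 hx].
exists x^T; first by rewrite trmx_eq0.
have : (A - B) *m x^T = 0 by rewrite -[A - _]trmxK -trmx_mul hx trmx0.
by rewrite mulmxBl => /eqP; rewrite subr_eq0 => /eqP.
Qed.

Lemma CH_vec (A : 'M[C]_2) (a b : C) (w : 'cV[C]_2) : (A - a%:M) *m (A - b%:M) = 0 ->
  A *m (A *m w - b *: w) = a *: (A *m w - b *: w).
Proof.
move=> h; have := congr1 (mulmx^~ w) h; rewrite mul0mx -mulmxA.
rewrite [(A - b%:M) *m w]mulmxBl mul_scalar_mx mulmxBl mul_scalar_mx.
by move/eqP; rewrite subr_eq0 => /eqP.
Qed.

Lemma CH_eig (A : 'M[C]_2) (a b c : C) (w : 'cV[C]_2) : (A - a%:M) *m (A - b%:M) = 0 ->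
  A *m w = c *: w -> ((c - a) * (c - b)) *: w = 0.
Proof.
move=> h hw; have := congr1 (mulmx^~ w) h; rewrite mul0mx -mulmxA.
rewrite [(A - b%:M) *m w]mulmxBl mul_scalar_mx hw -scalerBl -scalemxAr.
rewrite mulmxBl mul_scalar_mx hw -scalerBl scalerA mulrC //.
Qed.

Lemma cancel_cj (Q X Y : 'M[C]_2) : Q \in unitmx ->
  cj Q *m X *m Q = cj Q *m Y *m Q -> X = Y.
Proof.
move=> Qu /(congr1 (fun M => invmx (cj Q) *m M *m invmx Q)).
by rewrite !mulmxA !mulmxK // mulVmx ?cj_unit // !mul1mx.
Qed.

Lemma cj_invK (Q : 'M[C]_2) : Q \in unitmx -> cj (invmx Q) *m cj Q = 1%:M.
Proof. by move=> Qu; rewrite -cjM mulmxV // cj1. Qed.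

Lemma cj_invK' (Q : 'M[C]_2) : Q \in unitmx -> cj Q *m cj (invmx Q) = 1%:M.
Proof. by move=> Qu; rewrite -cjM mulVmx // cj1. Qed.

Lemma inv_diag (A H Q : 'M[C]_2) a b n1 n2 : Q \in unitmx ->
  A *m Q = Q *m D2 a b -> (a^*)%R * a = 1 -> (b^*)%R * b = 1 ->
  cj Q *m H *m Q = D2 n1 n2 -> cj A *m H *m A = H.
Proof.
move=> Qu hAQ ha hb hH; apply: (cancel_cj Qu).
have -> : cj Q *m (cj A *m H *m A) *m Q = cj (A *m Q) *m H *m (A *m Q).
  by rewrite cjM !mulmxA.
rewrite hAQ cjM -!mulmxA [cj Q *m (H *m _)]mulmxA [cj Q *m H *m _]mulmxA hH.
rewrite cjD2 !D2M mulrCA ha mulrCA hb !mulr1 -hH mulmxA //.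
Qed.

Lemma offdiag01 (K : 'M[C]_2) a b : cj (D2 a b) *m K *m D2 a b = K ->
  (a^*)%R * b != 1 -> K i0 i1 = 0.
Proof.
move=> /(congr1 (fun M : 'M[C]_2 => M i0 i1)); rewrite !mxE2 ?conjC0 => h ab.
have : ((a^*)%R * b - 1) * K i0 i1 = 0.
  by rewrite mulrBl mul1r -{2}h; ring.
by move/eqP; rewrite mulf_eq0 subr_eq0 (negbTE ab) => /eqP.
Qed.

Lemma offdiag10 (K : 'M[C]_2) a b : cj (D2 a b) *m K *m D2 a b = K ->
  (b^*)%R * a != 1 -> K i1 i0 = 0.
Proof.
move=> /(congr1 (fun M : 'M[C]_2 => M i1 i0)); rewrite !mxE2 ?conjC0 => h ab.
have : ((b^*)%R * a - 1) * K i1 i0 = 0.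
  by rewrite mulrBl mul1r -{2}h; ring.
by move/eqP; rewrite mulf_eq0 subr_eq0 (negbTE ab) => /eqP.
Qed.

Lemma hform_D2 (d1 d2 : C) u : hform (D2 d1 d2) u u =
  (u i0 ord0)^*%R * u i0 ord0 * d1 + (u i1 ord0)^*%R * u i1 ord0 * d2.
Proof. by rewrite {1 2}(v2_eta u) hform_v2 !mxE2; ring. Qed.

Lemma definite_diag (P : 'M[C]_2) d1 d2 : P \in unitmx -> 0 < d1 ->
  definite_form (cj (invmx P) *m D2 d1 d2 *m invmx P) <-> 0 < d2.
Proof.
move=> Pu d1p.
have hf v : hform (cj (invmx P) *m D2 d1 d2 *m invmx P) v v =
            hform (D2 d1 d2) (invmx P *m v) (invmx P *m v) by rewrite hform_mul.
have nz (u : 'cV[C]_2) : u != 0 -> P *m u != 0.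
  by move=> u0; apply: contraNneq u0 => h; rewrite -(mulKmx Pu u) h mulmx0.
have e01 : (v2 0 1 : 'cV[C]_2) != 0.
  by apply/eqP => /(congr1 (fun M : 'cV[C]_2 => M i1 ord0)); rewrite !mxE2 mxE => /eqP; rewrite oner_eq0.
have e10 : (v2 1 0 : 'cV[C]_2) != 0.
  by apply/eqP => /(congr1 (fun M : 'cV[C]_2 => M i0 ord0)); rewrite !mxE2 mxE => /eqP; rewrite oner_eq0.
split.
  case=> h.
    have := h _ (nz _ e01); rewrite hf mulKmx // hform_D2 !mxE2 conjC0 conjC1.
    by rewrite !mul0r add0r !mul1r.
  have := h _ (nz _ e10); rewrite hf mulKmx // hform_D2 !mxE2 conjC0 conjC1.
  by rewrite !mul0r addr0 !mul1r => d1n; move: (lt_trans d1p d1n); rewrite ltxx.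
move=> d2p; left => v v0; rewrite hf hform_D2.
set u := invmx P *m v.
have u0 : u != 0 by apply: contraNneq v0 => h; rewrite -(mulKVmx Pu v) -/u h mulmx0.
have g0 (x : C) : 0 <= (x^*)%R * x by rewrite mulrC mul_conjC_ge0.
have g1 (x : C) : x != 0 -> 0 < (x^*)%R * x by move=> x0; rewrite mulrC mul_conjC_gt0.
have t1 : 0 <= (u i0 ord0)^*%R * u i0 ord0 * d1 by apply: mulr_ge0; [apply: g0|apply: ltW].
have t2 : 0 <= (u i1 ord0)^*%R * u i1 ord0 * d2 by apply: mulr_ge0; [apply: g0|apply: ltW].
have [a0|a0] := eqVneq (u i0 ord0) 0.
  have b0 : u i1 ord0 != 0.
    apply: contraNneq u0 => b0; by rewrite (v2_eta u) a0 b0 v2_00.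
  by apply: ltr_wpDl => //; apply: mulr_gt0 => //; apply: g1.
by apply: ltr_pwDl => //; apply: mulr_gt0 => //; apply: g1.
Qed.

End Mx.

Section Main.
Variable R : realType.
Local Notation C := (R[i]).
Local Notation cj A := ((map_mx Num.conj A)^T).

Lemma MKM01 (a b c e s k1 k2 : C) : s != 0 ->
  (cj (mk2 (v2 (a / s) (c / s)) (v2 (- b / s) (- e / s))) *m D2 k1 k2 *m
     mk2 (v2 (a / s) (c / s)) (v2 (- b / s) (- e / s))) i0 i1 =
  - ((a^*)%R * b * k1 + (c^*)%R * e * k2) / ((s^*)%R * s).
Proof.
move=> s0; have s0' : (s^*)%R != 0 by rewrite conjC_eq0.
rewrite !mxE2 !(fmorph_div, rmorphN) /=.
move: (a^*)%R (c^*)%R (s^*)%R s0' => A' C' S' S0; field.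
by rewrite s0 S0.
Qed.

Lemma MKM10 (a b c e s k1 k2 : C) : s != 0 ->
  (cj (mk2 (v2 (a / s) (c / s)) (v2 (- b / s) (- e / s))) *m D2 k1 k2 *m
     mk2 (v2 (a / s) (c / s)) (v2 (- b / s) (- e / s))) i1 i0 =
  - ((b^*)%R * a * k1 + (e^*)%R * c * k2) / ((s^*)%R * s).
Proof.
move=> s0; have s0' : (s^*)%R != 0 by rewrite conjC_eq0.
rewrite !mxE2 !(fmorph_div, rmorphN) /=.
move: (b^*)%R (e^*)%R (s^*)%R s0' => B' E' S' S0; field.
by rewrite s0 S0.
Qed.

Lemma real_exists (z : C) : (z^*)%R = z -> exists c : R, z = c%:C.
Proof. by move=> h; apply/complex_realP; apply/CrealP. Qed.

Lemma XYreal (r1 r2 s1 s2 : C) : `|r1| = 1 -> `|r2| = 1 -> `|s1| = 1 -> `|s2| = 1 ->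
  (r1 - s2) * ((r1 - s1)^*)%R * (((r2 - s2)^*)%R * (r2 - s1)) =
  ((r1 - s2)^*)%R * (r1 - s1) * ((r2 - s2) * ((r2 - s1)^*)%R).
Proof.
move=> h1 h2 h3 h4.
have n1 := unit_neq0 h1; have n2 := unit_neq0 h2; have n3 := unit_neq0 h3; have n4 := unit_neq0 h4.
rewrite !rmorphB /= !unit_conj //; field.
by rewrite n1 n2 n3 n4.
Qed.

Lemma conj_ne1 (r1 r2 : C) : `|r1| = 1 -> r1 != r2 -> (r1^*)%R * r2 != 1.
Proof.
move=> h1 d; rewrite unit_conj //; apply: contra d => /eqP h.
have n1 := unit_neq0 h1.
by apply/eqP; apply: (@mulIC _ r1^-1); [rewrite invr_eq0|rewrite h mulVf].
Qed.

Lemma conj_unit1 (r : C) : `|r| = 1 -> (r^*)%R * r = 1.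
Proof. by move=> h; rewrite unit_conj // mulVf // unit_neq0. Qed.

Lemma nzE (A B : 'M[C]_2) (w : 'cV[C]_2) (k c s1 s2 : C) : w != 0 ->
  A *m w = B *m w -> (B - s1%:M) *m (B - s2%:M) = 0 -> c != s1 -> c != s2 -> k != 0 ->
  k *: (A *m w - c *: w) != 0.
Proof.
move=> w0 hw hB c1 c2 k0; apply/negP => /eqP /eqP.
rewrite scaler_eq0 (negbTE k0) /= subr_eq0 => /eqP h.
have /eqP := CH_eig hB (esym (etrans (esym h) hw)).
by rewrite scaler_eq0 (negbTE w0) orbF mulf_eq0 !subr_eq0 (negbTE c1) (negbTE c2).
Qed.

Lemma comb1 (x y : 'cV[C]_2) (r1 r2 s1 s2 : C) : r1 - r2 != 0 -> s1 - s2 != 0 ->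
  (s1 - s2)^-1 *: (x - s2 *: y) =
  ((r1 - s2) / (s1 - s2)) *: ((r1 - r2)^-1 *: (x - r2 *: y)) +
  ((r2 - s2) / (s1 - s2)) *: ((r2 - r1)^-1 *: (x - r1 *: y)).
Proof.
move=> h1 h2; have h3 : r2 - r1 != 0 by rewrite -opprB oppr_eq0.
by apply/cV2P; rewrite !mxE; field; rewrite h1 h2 h3.
Qed.

Lemma comb2 (x y : 'cV[C]_2) (r1 r2 s1 s2 : C) : r1 - r2 != 0 -> s1 - s2 != 0 ->
  (s2 - s1)^-1 *: (x - s1 *: y) =
  (- (r1 - s1) / (s1 - s2)) *: ((r1 - r2)^-1 *: (x - r2 *: y)) +
  (- (r2 - s1) / (s1 - s2)) *: ((r2 - r1)^-1 *: (x - r1 *: y)).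
Proof.
move=> h1 h2; have h3 : r2 - r1 != 0 by rewrite -opprB oppr_eq0.
have h4 : s2 - s1 != 0 by rewrite -opprB oppr_eq0.
by apply/cV2P; rewrite !mxE; field; rewrite h1 h2 h3 h4.
Qed.

Lemma conj_inv (A H P : 'M[C]_2) : cj A *m H *m A = H ->
  cj (A *m P) *m H *m (A *m P) = cj P *m H *m P.
Proof.
move=> h; rewrite cjM !mulmxA -[cj P *m cj A *m H]mulmxA -[cj P *m (cj A *m H) *m A]mulmxA h //.
Qed.

Lemma sandwich (K P H : 'M[C]_2) : K = cj P *m H *m P ->
  forall D : 'M[C]_2, cj D *m K *m D = cj (P *m D) *m H *m (P *m D).
Proof. by move=> -> D; rewrite cjM !mulmxA. Qed.

End Main.

Local Notation cj A := ((map_mx Num.conj A)^T).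

Unset Implicit Arguments.
Set Strict Implicit.

Theorem lemma24 (R : realType) (Rm Sm : 'M[R[i]]_2) (r1 r2 s1 s2 : R[i]) :
  Rm \in unitmx -> Sm \in unitmx ->
  diagonalizable Rm -> diagonalizable Sm ->
  eigenvalue Rm r1 -> eigenvalue Rm r2 -> eigenvalue Sm s1 -> eigenvalue Sm s2 ->
  `|r1| = 1 -> `|r2| = 1 -> `|s1| = 1 -> `|s2| = 1 ->
  r1 != r2 -> s1 != s2 ->
  [/\ r1 != s1, r1 != s2, r2 != s1 & r2 != s2] ->
  eigenvalue (Rm *m invmx Sm) 1 ->
  exists H : 'M[R[i]]_2,
    [/\ [/\ hermitian_mx H, nondegenerate_form H,
            invariant_form H Rm & invariant_form H Sm],
        (forall H' : 'M[R[i]]_2,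
            hermitian_mx H' -> nondegenerate_form H' ->
            invariant_form H' Rm -> invariant_form H' Sm ->
            exists c : R, H' = (c%:C) *: H)
      & (definite_form H <-> interlace r1 r2 s1 s2)].
Proof.
move=> Ru Su _ _ eR1 eR2 eS1 eS2 u1 u2 u3 u4 r12 s12 dd eRS.
have [d11 d12 d21 d22] := dd.
have r21 : r2 != r1 by rewrite eq_sym.
have s21 : s2 != s1 by rewrite eq_sym.
have CHR := CH2 eR1 eR2 r12; have CHR' := CH2 eR2 eR1 r21.
have CHS := CH2 eS1 eS2 s12; have CHS' := CH2 eS2 eS1 s21.
have [w w0 hw] := w_exists Su eRS.
have nr12 : r1 - r2 != 0 by rewrite subr_eq0.
have nr21 : r2 - r1 != 0 by rewrite subr_eq0.
have ns12 : s1 - s2 != 0 by rewrite subr_eq0.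
have ns21 : s2 - s1 != 0 by rewrite subr_eq0.
set E1 := (r1 - r2)^-1 *: (Rm *m w - r2 *: w).
set E2 := (r2 - r1)^-1 *: (Rm *m w - r1 *: w).
set F1 := (s1 - s2)^-1 *: (Sm *m w - s2 *: w).
set F2 := (s2 - s1)^-1 *: (Sm *m w - s1 *: w).
have hE1 : Rm *m E1 = r1 *: E1 by rewrite /E1 -scalemxAr (CH_vec w CHR) !scalerA mulrC.
have hE2 : Rm *m E2 = r2 *: E2 by rewrite /E2 -scalemxAr (CH_vec w CHR') !scalerA mulrC.
have hF1 : Sm *m F1 = s1 *: F1 by rewrite /F1 -scalemxAr (CH_vec w CHS) !scalerA mulrC.
have hF2 : Sm *m F2 = s2 *: F2 by rewrite /F2 -scalemxAr (CH_vec w CHS') !scalerA mulrC.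
have nE1 : E1 != 0 by apply: (nzE w0 hw CHS) => //; rewrite invr_eq0.
have nE2 : E2 != 0 by apply: (nzE w0 hw CHS) => //; rewrite invr_eq0.
have nF1 : F1 != 0 by apply: (nzE w0 (esym hw) CHR); [by rewrite eq_sym|by rewrite eq_sym|by rewrite invr_eq0].
have nF2 : F2 != 0 by apply: (nzE w0 (esym hw) CHR); [by rewrite eq_sym|by rewrite eq_sym|by rewrite invr_eq0].
set P := mk2 E1 E2; set Q := mk2 F1 F2.
have Pu : P \in unitmx := indep hE1 hE2 nE1 nE2 r12.
have Qu : Q \in unitmx := indep hF1 hF2 nF1 nF2 s12.
have RP : Rm *m P = P *m D2 r1 r2 by rewrite mk2_mulr hE1 hE2 mk2_D2.
have SQ : Sm *m Q = Q *m D2 s1 s2 by rewrite mk2_mulr hF1 hF2 mk2_D2.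
set a := r1 - s2; set b := r1 - s1; set c := r2 - s2; set e := r2 - s1; set sg := s1 - s2.
set M := mk2 (v2 (a / sg) (c / sg)) (v2 (- b / sg) (- e / sg)).
have QPM : Q = P *m M.
  rewrite /M mk2_mulr !mk2_v2 /Q /P; congr mk2.
    by rewrite /F1 /E1 /E2 -hw (comb1 _ _ nr12 ns12).
  by rewrite /F2 /E1 /E2 -hw (comb2 _ _ nr12 ns12).
have Mu : M \in unitmx by move: Qu; rewrite QPM unitmx_mul => /andP [].
have an : a != 0 by rewrite subr_eq0.
have bn : b != 0 by rewrite subr_eq0.
have cn : c != 0 by rewrite subr_eq0.
have en : e != 0 by rewrite subr_eq0.
have XYr : a * (b^*)%R * ((c^*)%R * e) = (a^*)%R * b * (c * (e^*)%R) by exact: XYreal.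
set X := (a^*)%R * b; set Y := (c^*)%R * e.
have Xn : X != 0 by rewrite mulf_neq0 ?conjC_eq0.
have Yn : Y != 0 by rewrite mulf_neq0 ?conjC_eq0.
have cY : (Y^*)%R = c * (e^*)%R by rewrite /Y rmorphM /= conjCK.
have cX : (X^*)%R = a * (b^*)%R by rewrite /X rmorphM /= conjCK.
set d1 := Y * (Y^*)%R; set d2 := - (X * (Y^*)%R).
have hd1 : (d1^*)%R = d1 by rewrite /d1 rmorphM /= conjCK mulrC.
have hd2 : (d2^*)%R = d2.
  rewrite /d2 rmorphN rmorphM /= conjCK cX cY; congr (- _).
  by rewrite /X /Y; move: XYr; move: (a^*)%R (b^*)%R (c^*)%R (e^*)%R => A' B' C' E' h; rewrite -h; ring.
have d1p : 0 < d1 by rewrite /d1 mul_conjC_gt0.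
have d1n : d1 != 0 := lt0r_neq0 d1p.
have d2n : d2 != 0.
  rewrite oppr_eq0; apply: mulf_neq0; [exact: Xn|rewrite conjC_eq0; exact: Yn].
pose D := D2 d1 d2; pose H := cj (invmx P) *m D *m invmx P.
have sgn : sg != 0 := ns12.
have cjPHP : cj P *m H *m P = D by rewrite /H !mulmxA (cj_invK' Pu) mul1mx (mulmxKV Pu).
have MDM : cj M *m D *m M = D2 ((cj M *m D *m M) i0 i0) ((cj M *m D *m M) i1 i1).
  apply/mx2P; rewrite ?D2E00 ?D2E11 ?D2E01 ?D2E10; [reflexivity| | |reflexivity].
    rewrite MKM01; last exact: sgn.
    rewrite -/X -/Y /d1 /d2.
    have -> : X * (Y * (Y^*)%R) + Y * - (X * (Y^*)%R) = 0 by ring.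
    by rewrite oppr0 mul0r.
  rewrite MKM10; last exact: sgn.
  rewrite /d1 /d2 cY /X.
  have -> : (b^*)%R * a * (Y * (c * (e^*)%R)) + (e^*)%R * c * - ((a^*)%R * b * (c * (e^*)%R)) =
     (c * (e^*)%R) * (a * (b^*)%R * ((c^*)%R * e) - (a^*)%R * b * (c * (e^*)%R)) by rewrite /Y; ring.
  by rewrite XYr subrr mulr0 oppr0 mul0r.
exists H; split.
- split.
  + by rewrite /hermitian_mx -map_trmx /H !cjM cjK cjD2 hd1 hd2 mulmxA.
  + apply: nondeg_unit; rewrite /H !unitmx_mul cj_unit unitmx_inv Pu /= ?andbT.
    exact: (D2_unit d1n d2n).
  + by apply/inv_formP; exact: inv_diag Pu RP (conj_unit1 u1) (conj_unit1 u2) cjPHP.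
  + apply/inv_formP; apply: inv_diag Qu SQ (conj_unit1 u3) (conj_unit1 u4) _.
    by rewrite QPM -(sandwich (esym cjPHP)) MDM.
- move=> H' hH' _ /inv_formP iR /inv_formP iS.
  set K := cj P *m H' *m P.
  have KR : cj (D2 r1 r2) *m K *m D2 r1 r2 = K by rewrite (sandwich erefl) -RP conj_inv.
  have K01 := offdiag01 KR (conj_ne1 u1 r12).
  have K10 := offdiag10 KR (conj_ne1 u2 r21).
  set K2 := cj Q *m H' *m Q.
  have KS : cj (D2 s1 s2) *m K2 *m D2 s1 s2 = K2 by rewrite (sandwich erefl) -SQ conj_inv.
  have K201 := offdiag01 KS (conj_ne1 u3 s12).
  have K2M : K2 = cj M *m K *m M by rewrite /K2 QPM -(sandwich erefl).
  have Keq : K = D2 (K i0 i0) (K i1 i1).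
    by apply/mx2P; rewrite ?D2E00 ?D2E11 ?D2E01 ?D2E10.
  move: K201; rewrite K2M Keq MKM01; last exact: sgn.
  rewrite -/X -/Y => h0.
  have hXY : X * K i0 i0 + Y * K i1 i1 = 0.
    move: h0 => /eqP; rewrite mulf_eq0 invr_eq0 mulf_eq0 conjC_eq0 (negbTE sgn) oppr_eq0 /=.
    by rewrite orbF => /eqP.
  have cjK : cj K = K by rewrite /K !cjM cjK !mulmxA [(map_mx _ H')^T]map_trmx hH'.
  have k1r : ((K i0 i0)^*)%R = K i0 i0.
    by move/(congr1 (fun M : 'M[R[i]]_2 => M i0 i0)): cjK; rewrite cjE.
  have [c0 hc0] : exists c0 : R, K i0 i0 / d1 = c0%:C.
    by apply: real_exists; rewrite fmorph_div /= k1r hd1.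
  exists c0.
  have -> : H' = cj (invmx P) *m K *m invmx P.
    by rewrite /K !mulmxA (cj_invK Pu) mul1mx (mulmxK Pu).
  have eD : D = D2 d1 d2 := erefl.
  clearbody K D.
  have -> : K = c0%:C *: D.
    rewrite -hc0; apply/mx2P; rewrite !mxE eD ?D2E00 ?D2E11 ?D2E01 ?D2E10 ?K01 ?K10 ?mulr0.
    + by rewrite (divfK d1n).
    + reflexivity.
    + reflexivity.
    apply: (mulIC Yn).
    have -> : Y * K i1 i1 = - (X * K i0 i0) by rewrite -(addKr (X * K i0 i0) (Y * K i1 i1)) hXY addr0.
    have Ycn : (Y^*)%R != 0 by rewrite conjC_eq0; exact: Yn.
    rewrite /d2 /d1; move: (Y^*)%R Ycn => Y' Y'n.
    move: (X) (Y) (K i0 i0) Yn Y'n => X0 Y0 k Y0n Y'n0.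
    by field; rewrite Y'n0 Y0n.
  by rewrite /H -scalemxAr -scalemxAl.
- rewrite /H (@definite_diag R P d1 d2 Pu d1p) /d2 oppr_gt0.
  by split => h; [apply/(interlace_sign u1 u2 u3 u4 r12 dd)|apply/(interlace_sign u1 u2 u3 u4 r12 dd)].
Qed.
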